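(* Let $L$ be an allowable $2l$-cycle chain for $\mathcal H_{m,\mathcal B,S}$. Then the number of distinct $2l$-cycles in the Tanner graph of $\mathcal H_{m,\mathcal B,S}$ corresponding to $L$ equals $m/n(L)$.
   Context: Let $m\ge1$, $\mathcal B=[B_1,\ldots,B_k]$ a list of subsets of a finite set of row-block indices, and $s_{i,j}\in\mathbb{Z}_m$ for $i\in B_j$. $\mathcal H_{m,\mathcal B,S}$ is the block matrix whose $(i,j)$ block is the $m\times m$ circulant permutation matrix with entry $(x,y)$ equal to 1 iff $x\equiv y+s_{i,j}\pmod m$ when $i\in B_j$, and zero otherwise; its Tanner graph has check nodes $c(i,x)$, variable nodes $u(j,y)$, with $c(i,x)\sim u(j,y)$ iff $i\in B_j$ and $x\equiv y+s_{i,j}$. A $2l$-cycle chain ($l\ge2$) is $L=(i_0,j_0,\ldots,i_{l-1},j_{l-1})$, indices mod $l$, with $i_t,i_{t+1}\in B_{j_t}$, $i_t\ne i_{t+1}$, $j_t\ne j_{t+1}$, and $\sum_{t=0}^{l-1}(s_{i_t,j_t}-s_{i_{t+1},j_t})\equiv0\pmod m$. For $r\in\mathbb{Z}_m$: $x_0=r$, $y_t=x_t-s_{i_t,j_t}$, $x_{t+1}=y_t+s_{i_{t+1},j_t}$ (mod $m$), giving the closed walk $W_r=c(i_0,x_0),u(j_0,y_0),c(i_1,x_1),\ldots,u(j_{l-1},y_{l-1}),c(i_0,x_0)$; $L$ is allowable if for every $r$ the $2l$ vertices $c(i_t,x_t),u(j_t,y_t)$ are pairwise distinct, in which case $W_r$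 traces a $2l$-cycle (a subgraph) of the Tanner graph. A $2l$-cycle of the Tanner graph corresponds to $L$ if it is the cycle traced by $W_r$ for some $r\in\mathbb{Z}_m$. Let $e$ be the smallest integer in $\{1,\ldots,l\}$ such that $(i_{t+e},j_{t+e})=(i_t,j_t)$ for all $t$ (indices mod $l$); then $e\mid l$ and $n(L)=l/e$. *)

(* Defs.v *)
From HB Require Import structures.
From mathcomp Require Import all_boot all_order all_algebra.
Set Implicit Arguments. Unset Strict Implicit. Unset Printing Implicit Defensive.
Import GRing.Theory.
Local Open Scope ring_scope.

(* Z_m for m >= 1, represented as 'I_(m.-1).+1 (which equals 'I_m when 0 < m)
   with its canonical Z-module structure (addition mod m). *)
Notation Zm m := 'I_((m.-1).+1).

Section Chain.
(* a row-block indices 'I_a, k column-block indices 'I_k,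
   B j = B_j (subset of row-block indices), s i j = s_{i,j} in Z_m.
   A chain of length l is given by I, J : nat -> ..., of which only the
   values at 0..l-1 matter: indices are always taken mod l. *)
Variables (m a k : nat) (B : 'I_k -> {set 'I_a}) (s : 'I_a -> 'I_k -> Zm m).
Variables (l : nat) (I : nat -> 'I_a) (J : nat -> 'I_k).

Definition It (t : nat) : 'I_a := I (t %% l)%N.
Definition Jt (t : nat) : 'I_k := J (t %% l)%N.

Definition is_cycle_chain : Prop :=
  (2 <= l)%N /\
  (forall t : nat, (t < l)%N ->
     [/\ It t \in B (Jt t), It t.+1 \in B (Jt t),
         It t != It t.+1 & Jt t != Jt t.+1]) /\
  \sum_(t < l) (s (It t) (Jt t) - s (It t.+1) (Jt t)) = 0.

Fixpoint wx (r : Zm m) (t : nat) : Zm m :=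
  match t with
  | 0 => r
  | t'.+1 => wx r t' - s (It t') (Jt t') + s (It t) (Jt t')
  end.
Definition wy (r : Zm m) (t : nat) : Zm m := wx r t - s (It t) (Jt t).

Definition cnode (r : Zm m) (t : nat) : 'I_a * Zm m := (It t, wx r t).
Definition vnode (r : Zm m) (t : nat) : 'I_k * Zm m := (Jt t, wy r t).

Definition tanner_adj (c : 'I_a * Zm m) (u : 'I_k * Zm m) : bool :=
  (c.1 \in B u.1) && (c.2 == u.2 + s c.1 u.1).

(* L is allowable: for every r the 2l vertices c(i_t,x_t), u(j_t,y_t)
   (t = 0..l-1) are pairwise distinct (check and variable nodes are
   automatically distinct from each other). *)
Definition allowable : Prop :=
  forall r : Zm m, forall t1 t2 : 'I_l, t1 != t2 ->
    cnode r t1 != cnode r t2 /\ vnode r t1 != vnode r t2.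

(* the cycle (subgraph) traced by W_r, represented by its edge set;
   edges are pairs (check node, variable node). *)
Definition cycle_of (r : Zm m) : {set ('I_a * Zm m) * ('I_k * Zm m)} :=
  [set e | [exists t : 'I_l,
      (e == (cnode r t, vnode r t)) || (e == (cnode r t.+1, vnode r t))]].

Definition cycles_of_chain : {set {set ('I_a * Zm m) * ('I_k * Zm m)}} :=
  [set cycle_of r | r : Zm m].

Definition is_shift_period (e : nat) : bool :=
  [forall t : 'I_l, (It (t + e)%N == It t) && (Jt (t + e)%N == Jt t)].
Definition chain_e : nat := (find is_shift_period (iota 1 l)).+1.
Definition chain_n : nat := (l %/ chain_e)%N.
End Chain.

(* Main.v *)
Require Import Defs.
From mathcomp Require Import all_boot all_order all_algebra.
From mathcomp Require Import zify.
Set Implicit Arguments. Unset Strict Implicit. Unset Printing Implicit Defensive.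
Import GRing.Theory.

Definition per (a k l : nat) (I : nat -> 'I_a) (J : nat -> 'I_k) (p : nat) :=
  forall u, It l I (p + u) = It l I u /\ Jt l J (p + u) = Jt l J u.

Lemma It_mod a l (I : nat -> 'I_a) t : It l I (t %% l) = It l I t.
Proof. by rewrite /It modn_mod. Qed.
Lemma Jt_mod k l (J : nat -> 'I_k) t : Jt l J (t %% l) = Jt l J t.
Proof. by rewrite /Jt modn_mod. Qed.

Lemma per_mul a k l (I : nat -> 'I_a) (J : nat -> 'I_k) q : per l I J (q * l).
Proof. by move=> u; rewrite /It /Jt modnMDl. Qed.

Lemma per_add a k l (I : nat -> 'I_a) (J : nat -> 'I_k) p q :
  per l I J p -> per l I J q -> per l I J (p + q).
Proof.
move=> hp hq u; rewrite -addnA; have [-> ->] := hp (q + u); exact: hq.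
Qed.

Lemma per_sub a k l (I : nat -> 'I_a) (J : nat -> 'I_k) p q :
  per l I J p -> per l I J (p + q) -> per l I J q.
Proof.
move=> hp hq u; have [<- <-] := hp (q + u); rewrite addnA; exact: hq.
Qed.

Lemma per_mule a k l (I : nat -> 'I_a) (J : nat -> 'I_k) p q :
  per l I J p -> per l I J (q * p).
Proof.
move=> hp; elim: q => [|q IH]; first by move=> u.
by rewrite mulSn; apply: per_add.
Qed.

Section W.
Variables (m a k : nat) (s : 'I_a -> 'I_k -> Zm m).
Variables (l : nat) (I : nat -> 'I_a) (J : nat -> 'I_k).
Local Notation d := (wx s l I J 0%R).
Local Open Scope ring_scope.

Lemma wx_add0 r t : wx s l I J r t = r + d t.
Proof.
elim: t => [|t IH] /=; first by rewrite addr0.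
by rewrite IH !addrA.
Qed.

Lemma d_add p u : per l I J p -> d (p + u)%N = d p + d u.
Proof.
move=> hp; elim: u => [|u IH]; first by rewrite addn0 addr0.
rewrite addnS /= IH.
have [h1 h2] := hp u; have [h3 _] := hp u.+1.
rewrite h1 h2 -addnS h3 !addrA.
by [].
Qed.

Lemma d_sum t : d t = - \sum_(i < t) (s (It l I i) (Jt l J i) - s (It l I i.+1) (Jt l J i)).
Proof.
elim: t => [|t IH]; first by rewrite big_ord0 oppr0.
by rewrite big_ord_recr /= IH opprD opprB addrA addrAC.
Qed.

Variable B : 'I_k -> {set 'I_a}.
Hypothesis Hch : is_cycle_chain B s l I J.
Hypothesis Hal : allowable s l I J.

Lemma l_gt0 : (0 < l)%N.
Proof. by case: Hch => h _; apply: leq_trans h. Qed.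

Lemma d_l : d l = 0.
Proof. by case: Hch => _ [_ h]; rewrite d_sum h oppr0. Qed.

Lemma per_l : per l I J l.
Proof. by have := per_mul l I J 1; rewrite mul1n. Qed.

Lemma d_mull q : d (q * l)%N = 0.
Proof.
elim: q => [|q IH] //; by rewrite mulSn d_add ?IH ?d_l ?addr0 //; exact: per_l.
Qed.


Lemma cnode_per r p u : per l I J p -> cnode s l I J r (p + u)%N = cnode s l I J (r + d p) u.
Proof.
move=> hp; rewrite /cnode (wx_add0 r) (wx_add0 (r + d p)) d_add //; have [-> _] := hp u; by rewrite addrA.
Qed.

Lemma vnode_per r p u : per l I J p -> vnode s l I J r (p + u)%N = vnode s l I J (r + d p) u.
Proof.
move=> hp; rewrite /vnode /wy (wx_add0 r) (wx_add0 (r + d p)) d_add //; have [-> ->] := hp u; by rewrite addrA.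
Qed.

Lemma cnode_mod r t : cnode s l I J r (t %% l) = cnode s l I J r t.
Proof.
by rewrite {2}(divn_eq t l) (cnode_per _ _ (per_mul l I J _)) d_mull addr0.
Qed.

Lemma vnode_mod r t : vnode s l I J r (t %% l) = vnode s l I J r t.
Proof.
by rewrite {2}(divn_eq t l) (vnode_per _ _ (per_mul l I J _)) d_mull addr0.
Qed.

Lemma modS_eq p t : (p %% l = t %% l -> p.+1 %% l = t.+1 %% l)%N.
Proof. by move=> h; rewrite -[p.+1]addn1 -[t.+1]addn1 -modnDml h modnDml. Qed.

Lemma mem_cycle r (x : ('I_a * Zm m) * ('I_k * Zm m)) : x \in cycle_of s l I J r <->
  exists t, x = (cnode s l I J r t, vnode s l I J r t) \/
            x = (cnode s l I J r t.+1, vnode s l I J r t).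
Proof.
rewrite inE; split.
  by case/existsP => t /orP [] /eqP ->; exists t; [left|right].
case=> t h; apply/existsP; exists (Ordinal (ltn_pmod t l_gt0)) => /=.
rewrite cnode_mod vnode_mod -(cnode_mod r (t %% l)%N.+1).
rewrite (modS_eq (modn_mod t l)) cnode_mod.
by case: h => ->; rewrite eqxx ?orbT.
Qed.

Lemma v_inj r p q : vnode s l I J r p = vnode s l I J r q -> (p %% l = q %% l)%N.
Proof.
rewrite -vnode_mod -(vnode_mod r q) => h.
pose o1 := Ordinal (ltn_pmod p l_gt0); pose o2 := Ordinal (ltn_pmod q l_gt0).
case: (eqVneq o1 o2) => [/(congr1 val) //|ne].
by have [_ /eqP] := Hal r ne.
Qed.

Lemma c_inj r p q : cnode s l I J r p = cnode s l I J r q -> (p %% l = q %% l)%N.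
Proof.
rewrite -cnode_mod -(cnode_mod r q) => h.
pose o1 := Ordinal (ltn_pmod p l_gt0); pose o2 := Ordinal (ltn_pmod q l_gt0).
case: (eqVneq o1 o2) => [/(congr1 val) //|ne].
by have [/eqP] := Hal r ne.
Qed.

Lemma L1 r c p : (c, vnode s l I J r p) \in cycle_of s l I J r ->
  c = cnode s l I J r p \/ c = cnode s l I J r p.+1.
Proof.
case/mem_cycle => t [] /pair_equal_spec [-> hv]; have h := v_inj hv.
  by left; rewrite -(cnode_mod r p) h cnode_mod.
by right; rewrite -(cnode_mod r p.+1) (modS_eq h) cnode_mod.
Qed.

Lemma L2 r v p : (cnode s l I J r p.+1, v) \in cycle_of s l I J r ->
  v = vnode s l I J r p.+1 \/ v = vnode s l I J r p.
Proof.
case/mem_cycle => t [] /pair_equal_spec [hc ->]; have h := c_inj hc.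
  by left; rewrite -(vnode_mod r p.+1) h vnode_mod.
right; rewrite -(vnode_mod r t) -(vnode_mod r p).
by move/eqP: h; rewrite -[p.+1]addn1 -[t.+1]addn1 eqn_modDr => /eqP ->.
Qed.

Lemma adjI u : It l I u.+1 != It l I u.
Proof.
case: Hch => _ [h _]; have [_ _ h1 _] := h _ (ltn_pmod u l_gt0).
by move: h1; rewrite It_mod /It (modS_eq (modn_mod u l)) eq_sym.
Qed.

Lemma adjJ u : Jt l J u.+1 != Jt l J u.
Proof.
case: Hch => _ [h _]; have [_ _ _ h1] := h _ (ltn_pmod u l_gt0).
by move: h1; rewrite Jt_mod /Jt (modS_eq (modn_mod u l)) eq_sym.
Qed.

Lemma P_per p : is_shift_period l I J p -> per l I J p.
Proof.
move=> /forallP h u; have /andP [/eqP h1 /eqP h2] := h (Ordinal (ltn_pmod u l_gt0)).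
by move: h1 h2; rewrite /It /Jt /= modnDml !modn_mod addnC => -> ->.
Qed.

Lemma per_P p : per l I J p -> is_shift_period l I J p.
Proof.
by move=> hp; apply/forallP => t; have [h1 h2] := hp t; rewrite addnC h1 h2 !eqxx.
Qed.

Local Notation e := (chain_e l I J).

Lemma e_facts : [/\ (0 < e)%N, (e <= l)%N, per l I J e &
   forall p, (0 < p < e)%N -> ~ per l I J p].
Proof.
have hl : has (is_shift_period l I J) (iota 1 l).
  apply/hasP; exists l; first by rewrite mem_iota l_gt0 add1n ltnSn.
  by apply/forallP => t; rewrite /It /Jt modnDr !eqxx.
have hi : (find (is_shift_period l I J) (iota 1 l) < l)%N.
  by have := hl; rewrite has_find size_iota.
split => //.
- apply: P_per; have := nth_find 0%N hl; rewrite nth_iota //.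
- move=> p /andP [p0 pe] hp.
  have := @before_find _ 0%N (is_shift_period l I J) (iota 1 l) p.-1.
  rewrite nth_iota; last by move: pe; rewrite /chain_e; lia.
  rewrite add1n prednK // per_P // => h; suff: true = false by []; apply: h.
  by move: pe; rewrite /chain_e; lia.
Qed.

Lemma per_dvd t : per l I J t -> (e %| t)%N.
Proof.
have [e0 el he hmin] := e_facts => ht.
have hq := per_mule (t %/ e)%N he.
rewrite (divn_eq t e) in ht; have hr := per_sub hq ht.
case: (posnP (t %% e)%N) => [h0|pos]; first by rewrite /dvdn h0.
by exfalso; apply: (hmin _ _ hr); rewrite pos ltn_pmod.
Qed.

Local Notation n := (chain_n l I J).

Lemma n_facts : (n * e = l)%N /\ (0 < n)%N.
Proof.
have [e0 el _ _] := e_facts.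
split; first by rewrite /chain_n (divnK (per_dvd per_l)).
by rewrite /chain_n divn_gt0.
Qed.

Local Notation D := (d e).

Lemma d_mule q : d (q * e)%N = D *+ q.
Proof.
have [_ _ he _] := e_facts.
elim: q => [|q IH]; first by rewrite mul0n mulr0n.
by rewrite mulSn d_add // IH mulrS.
Qed.

Lemma D_n : D *+ n = 0.
Proof. by rewrite -d_mule; have [-> _] := n_facts; exact: d_l. Qed.

Lemma cnode_sh r p u : per l I J p -> cnode s l I J (r + d p) u = cnode s l I J r (p + u)%N.
Proof. by move=> hp; rewrite cnode_per. Qed.
Lemma vnode_sh r p u : per l I J p -> vnode s l I J (r + d p) u = vnode s l I J r (p + u)%N.
Proof. by move=> hp; rewrite vnode_per. Qed.

Lemma cnode_l r u : cnode s l I J r (l + u)%N = cnode s l I J r u.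
Proof. by rewrite (cnode_per _ _ per_l) d_l addr0. Qed.
Lemma vnode_l r u : vnode s l I J r (l + u)%N = vnode s l I J r u.
Proof. by rewrite (vnode_per _ _ per_l) d_l addr0. Qed.

Lemma cyc_shift1 r : cycle_of s l I J (r + D) = cycle_of s l I J r.
Proof.
have [e0 el he _] := e_facts.
apply/setP => x; apply/idP/idP => /mem_cycle [t h]; apply/mem_cycle.
  exists (e + t)%N; by rewrite -addnS -!(cnode_sh r) // -vnode_sh.
exists (t + (l - e))%N.
have E1 : (e + (t + (l - e)) = l + t)%N by lia.
have E2 : (e + (t + (l - e)).+1 = l + t.+1)%N by lia.
by rewrite !cnode_sh // vnode_sh // E1 E2 !cnode_l vnode_l.
Qed.

Lemma cyc_shift r j : cycle_of s l I J (r + D *+ j) = cycle_of s l I J r.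
Proof.
elim: j => [|j IH]; first by rewrite mulr0n addr0.
by rewrite mulrS addrCA addrC cyc_shift1.
Qed.

Lemma cyc_fiber r r' : cycle_of s l I J r' = cycle_of s l I J r ->
  exists j : 'I_n, r' = r + D *+ j.
Proof.
move=> Heq.
have hl2 : (2 <= l)%N by case: Hch.
have mem' : forall x, x \in cycle_of s l I J r' -> x \in cycle_of s l I J r by move=> x; rewrite Heq.
have E0 : forall u, (cnode s l I J r' u.+1, vnode s l I J r' u) \in cycle_of s l I J r.
  by move=> u; apply: mem'; apply/mem_cycle; exists u; right.
have E1 : forall u, (cnode s l I J r' u, vnode s l I J r' u) \in cycle_of s l I J r.
  by move=> u; apply: mem'; apply/mem_cycle; exists u; left.
have /mem_cycle [t [] /pair_equal_spec [hc hv]] := E1 0%N.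
- have claim : forall u, cnode s l I J r' u = cnode s l I J r (t + u)%N /\
                         vnode s l I J r' u = vnode s l I J r (t + u)%N.
    elim=> [|u [IHc IHv]]; first by rewrite addn0.
    have := E0 u; rewrite IHv => /L1 [] hc1.
      by exfalso; move: hc1; rewrite -IHc => /(congr1 fst) /= h; move: (adjI u); rewrite h eqxx.
    have := E1 u.+1; rewrite hc1 => /L2 [] hv1.
      by split; rewrite ?hc1 ?hv1 addnS.
    by exfalso; move: hv1; rewrite -IHv => /(congr1 fst) /= h; move: (adjJ u); rewrite h eqxx.
  have pt : per l I J t.
    move=> u; have [/(congr1 fst) /= h1 /(congr1 fst) /= h2] := claim u; by [].
  have [q tq] : exists q, t = (q * e)%N by exists (t %/ e)%N; rewrite divnK // per_dvd.
  rewrite {}tq in hc.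
  have [_ n0] := n_facts.
  exists (Ordinal (ltn_pmod q n0)) => /=.
  move: hc => /(congr1 snd) /=; rewrite wx_add0 => ->.
  rewrite d_mule {1}(divn_eq q n) mulrnDr (mulnC (q %/ n)%N) mulrnA D_n mul0rn add0r.
  by [].
- exfalso.
  have claim : forall u, cnode s l I J r' u = cnode s l I J r (t + u * l.-1).+1 /\
                         vnode s l I J r' u = vnode s l I J r (t + u * l.-1).
    elim=> [|u [IHc IHv]]; first by rewrite mul0n addn0.
    have E2 : ((t + u.+1 * l.-1).+1 = l + (t + u * l.-1))%N by lia.
    have := E0 u; rewrite IHv => /L1 [] hc1; last first.
      by exfalso; move: hc1; rewrite -IHc => /(congr1 fst) /= h; move: (adjI u); rewrite h eqxx.
    have hc2 : cnode s l I J r' u.+1 = cnode s l I J r (t + u.+1 * l.-1).+1 by rewrite E2 cnode_l.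
    split => //.
    have := E1 u.+1; rewrite hc2 => /L2 [] hv1 //.
    by exfalso; move: hv1; rewrite E2 vnode_l -IHv => /(congr1 fst) /= h; move: (adjJ u); rewrite h eqxx.
  have [h [ht|ht]] : exists h, t = (2 * h)%N \/ t = (2 * h).+1.
    exists t./2; move: (odd_double_half t); rewrite -mul2n; case: (odd t) => /= ht; [right|left]; lia.
  + have [hc1 _] := claim h.
    have E3 : ((t + h * l.-1).+1 = h * l + h.+1)%N by lia.
    move: hc1; rewrite E3 (cnode_per _ _ (per_mul l I J h)) => /(congr1 fst) /= h1.
    by move: (adjI h); rewrite h1 eqxx.
  + have [_ hv1] := claim h.
    have E3 : ((t + h * l.-1) = h * l + h.+1)%N by lia.
    move: hv1; rewrite E3 (vnode_per _ _ (per_mul l I J h)) => /(congr1 fst) /= h1.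
    by move: (adjJ h); rewrite h1 eqxx.
Qed.

Lemma D_inj (i j : 'I_n) : D *+ i = D *+ j -> i = j.
Proof.
have [e0 el he _] := e_facts; have [ne n0] := n_facts.
wlog ij : i j / (i <= j)%N.
  move=> H hij; case: (leqP i j) => [|/ltnW] h; first exact: H.
  by apply/esym/H.
move=> hD; apply/val_inj => /=; apply/eqP; rewrite eqn_leq ij /= leqNgt; apply/negP => lt.
have hf : D *+ (j - i) = 0.
  have hj : D *+ j = D *+ i + D *+ (j - i) by rewrite -mulrnDr subnKC.
  by apply: (@addrI _ (D *+ i)); rewrite addr0 -hj hD.
have r0 : Zm m := 0.
have h1 : cnode s l I J r0 ((j - i) * e + 0)%N = cnode s l I J r0 0%N.
  by rewrite (cnode_per _ _ (per_mule _ he)) d_mule hf addr0.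
have := c_inj h1; rewrite addn0 mod0n modn_small; last first.
  have h2 : ((j - i) * e < n * e)%N by rewrite ltn_pmul2r // (leq_ltn_trans (leq_subr _ _) (ltn_ord j)).
  by rewrite ne in h2.
by move/eqP; rewrite muln_eq0 (negbTE (lt0n_neq0 e0)) orbF subn_eq0 leqNgt lt.
Qed.

Lemma fiber_card r : #|[set r' | cycle_of s l I J r' == cycle_of s l I J r]| = n.
Proof.
have -> : [set r' | cycle_of s l I J r' == cycle_of s l I J r] =
          [set r + D *+ (val j) | j : 'I_n].
  apply/setP => x; rewrite inE; apply/eqP/imsetP.
    by move/cyc_fiber => [j ->]; exists j.
  by case=> j _ ->; rewrite cyc_shift.
rewrite card_imset ?card_ord // => i j /addrI; exact: D_inj.
Qed.
End W.

Lemma card_fibers (T U : finType) (f : T -> U) c :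
  (forall x, #|[set y | f y == f x]| = c) -> (#|[set f x | x : T]| * c = #|T|)%N.
Proof.
move=> hc; have -> : #|T| = (\sum_(x : T) 1)%N by rewrite sum1_card.
rewrite (partition_big f (fun C => C \in [set f x | x : T])) /=; last first.
  by move=> x _; apply: imset_f.
rewrite -sum_nat_const; apply: eq_bigr => C /imsetP [x _ ->].
by rewrite -(hc x) sum1dep_card; apply: eq_card => y; rewrite inE.
Qed.

Theorem mainTheorem8 (m a k : nat) (B : 'I_k -> {set 'I_a})
    (s : 'I_a -> 'I_k -> 'I_((m.-1).+1)) (l : nat)
    (I : nat -> 'I_a) (J : nat -> 'I_k) :
  (0 < m)%N ->
  is_cycle_chain B s l I J ->
  allowable s l I J ->
  #|cycles_of_chain s l I J| = (m %/ chain_n l I J)%N.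
Proof.
move=> m0 hch hal.
have [_ n0] := n_facts hch.
have hf := card_fibers (fiber_card hch hal).
have hm : #|'I_((m.-1).+1)| = m by rewrite card_ord prednK.
rewrite hm in hf.
move: hf; rewrite /cycles_of_chain.
move: #|[set cycle_of s l I J r | r : Zm m]| => C hf.
by rewrite -hf mulnK.
Qed.
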